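(* Let $f\colon[n]\to\mathbb{R}$ and let $x<y<z$ be elements of $[n]$ such that $f$ is not convex on $\{x,y,z\}$, i.e. $\frac{f(y)-f(x)}{y-x}>\frac{f(z)-f(y)}{z-y}$. Then at least one of $x$, $y$, $z$ fails some triple test rooted at it whose height is at most $2\max\{y-x,\,z-y\}$.
   Context: $[n]=\{0,\dots,n-1\}$. For $a\in[n]$, a triple test rooted at $a$ is a (not necessarily sorted) triple $(a,b,c)$ such that $b\in\{2^k\lfloor\frac{a-1}{2^k}\rfloor,\ 2^k\lceil\frac{a+1}{2^k}\rceil\}$ for some integer $k$ with $1\le2^k<n$, and $c\in\{a+1,b+1\}$; the number $2^k$ is the height of the triple test, and $b$ is called a hub of $a$. The point $a$ fails the triple test if $f$ is not convex on $\{a,b,c\}$, where $f$ is convex on a set of three reals $u<v<w$ iff $\frac{f(v)-f(u)}{v-u}\le\frac{f(w)-f(v)}{w-v}$ (a set with fewer than three points is trivially convex). *)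

(* Defs.v *)
From mathcomp Require Import all_boot all_order all_algebra.
Set Implicit Arguments. Unset Strict Implicit. Unset Printing Implicit Defensive.
Import Order.TTheory GRing.Theory Num.Theory.
Local Open Scope ring_scope.

Definition slope (R : realFieldType) (f : nat -> R) (u v : nat) : R :=
  (f v - f u) / (v%:R - u%:R).

(* For a set of three points this is exactly the
   paper's definition; sets with fewer than three points are trivially convex. *)
Definition convex_on (R : realFieldType) (f : nat -> R) (S : seq nat) : Prop :=
  forall u v w : nat, u \in S -> v \in S -> w \in S ->
    (u < v)%N -> (v < w)%N -> slope f u v <= slope f v w.

(* b is a hub of a at height 2^k:
   b = 2^k * floor((a-1)/2^k)  (only meaningful/nonnegative when a >= 1; for a = 0
   this value is -2^k, outside [n]), or b = 2^k * ceil((a+1)/2^k),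
   where ceil((a+1)/2^k) = floor((a+2^k)/2^k). *)
Definition is_hub (k a b : nat) : Prop :=
  ((0 < a)%N /\ b = (2 ^ k * ((a - 1) %/ 2 ^ k))%N) \/
  b = (2 ^ k * ((a + 2 ^ k) %/ 2 ^ k))%N.

(* (a,b,c) is a triple test rooted at a of height 2^k in [n]
   (all three points must lie in [n] = {0,...,n-1}, the domain of f). *)
Definition triple_test (n a b c k : nat) : Prop :=
  [/\ (1 <= 2 ^ k < n)%N, is_hub k a b, (c = a.+1 \/ c = b.+1)
      & [/\ (a < n)%N, (b < n)%N & (c < n)%N]].

Definition fails_test (R : realFieldType) (n : nat) (f : nat -> R) (a k : nat) : Prop :=
  exists b c : nat, triple_test n a b c k /\ ~ convex_on f [:: a; b; c].

(* Main.v *)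
Require Import Defs.
From mathcomp Require Import all_boot all_order all_algebra.
From mathcomp Require Import zify ring lra.
From Stdlib Require Import Classical.
Import Order.TTheory GRing.Theory Num.Theory.
Local Open Scope ring_scope.
Set Implicit Arguments. Unset Strict Implicit.

Lemma up_hub (i u m q : nat) : m = (2 ^ i * q)%N -> (u < m)%N -> (m <= u + 2 ^ i)%N ->
  is_hub i u m.
Proof.
move=> Hm H1 H2; right.
have P0 : (0 < 2 ^ i)%N by rewrite expn_gt0.
have -> : (u + 2 ^ i = q * 2 ^ i + (u + 2 ^ i - m))%N by rewrite Hm mulnC in H1 H2 *; lia.
rewrite divnMDl // divn_small; last by lia.
by rewrite addn0 Hm.
Qed.

Lemma low_hub (i v m q : nat) : m = (2 ^ i * q)%N -> (m < v)%N -> (v <= m + 2 ^ i)%N ->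
  is_hub i v m.
Proof.
move=> Hm H1 H2; left; split; first by lia.
have P0 : (0 < 2 ^ i)%N by rewrite expn_gt0.
have -> : (v - 1 = q * 2 ^ i + (v - 1 - m))%N by rewrite Hm mulnC in H1 H2 *; lia.
rewrite divnMDl // divn_small; last by lia.
by rewrite addn0 Hm.
Qed.

Lemma exist_mid (j : nat) : forall u v : nat, (u.+1 < v)%N -> (v - u <= 2 ^ j)%N ->
  exists i q, [/\ (i <= j)%N, (u < 2 ^ i * q < v)%N, (2 ^ i * q <= u + 2 ^ i)%N
     & (v <= 2 ^ i * q + 2 ^ i)%N].
Proof.
elim: j => [|j IH] u v Huv Hd.
  by rewrite expn0 in Hd; lia.
set p := (2 ^ j)%N.
have P0 : (0 < p)%N by rewrite expn_gt0.
have Hp2 : (2 ^ j.+1 = 2 * p)%N by rewrite expnS.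
set q0 := (u %/ p)%N.
have Hq0 : (p * q0 <= u < p * q0 + p)%N.
  have := divn_eq u p; have := ltn_pmod u P0; rewrite /q0 mulnC; lia.
case: (leqP v (p * q0 + p)) => Hv1.
  have [i [q [Hi H1 H2 H3]]] := IH u v Huv ltac:(lia).
  by exists i, q; split => //; lia.
case: (leqP v (p * q0 + p + p)) => Hv2.
  exists j, q0.+1; split => //; rewrite -/p mulnS; lia.
have [r Hr] : exists r, (q0.+1 = 2 * r \/ q0.+1 = 2 * r + 1)%N.
  exists (q0.+1 %/ 2)%N; rewrite {1 3}(divn_eq q0.+1 2).
  have : (q0.+1 %% 2 < 2)%N by rewrite ltn_pmod.
  lia.
have E : (p * q0.+1 = p * q0 + p)%N by rewrite mulnS addnC.
case: Hr => Hr.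
  exists j.+1, r; rewrite Hp2 -mulnA; have E2 : (p * (2 * r) = p * q0 + p)%N by rewrite -Hr.
  rewrite mulnA (mulnC 2 p) -mulnA; split; lia.
exists j.+1, r.+1; rewrite Hp2 -mulnA.
have E2 : (p * (2 * r + 1) = p * q0 + p)%N by rewrite -Hr.
rewrite mulnDr muln1 in E2.
rewrite mulnA (mulnC 2 p) -mulnA mulnS; split; lia.
Qed.
Section S.
Variables (R : realFieldType) (f : nat -> R).

Lemma dpos (a b : nat) : (a < b)%N -> 0 < (b%:R - a%:R : R).
Proof. by move=> H; rewrite subr_gt0 ltr_nat. Qed.

Lemma slope_comb (u v w : nat) : (u < v)%N -> (v < w)%N ->
  slope f u w * (w%:R - u%:R) = slope f u v * (v%:R - u%:R) + slope f v w * (w%:R - v%:R).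
Proof.
move=> H1 H2; rewrite /slope.
rewrite !mulfVK ?lt0r_neq0 ?dpos //; [ring | lia].
Qed.

Lemma comb_le (u v w : nat) (S : R) : (u < v)%N -> (v < w)%N ->
  slope f u v <= S -> slope f v w <= S -> slope f u w <= S.
Proof.
move=> H1 H2 A B.
have := slope_comb H1 H2. have := dpos H1. have := dpos H2.
have E : (w%:R - u%:R : R) = (v%:R - u%:R) + (w%:R - v%:R) by ring.
rewrite E. set a := (v%:R - u%:R). set b := (w%:R - v%:R). move=> Pb Pa Hc.
have : slope f u w * (a + b) <= S * (a + b).
  rewrite Hc (mulrDr S); apply: lerD; apply: ler_wpM2r => //; exact: ltW.
by rewrite ler_pM2r // addr_gt0.
Qed.

Lemma comb_ge (u v w : nat) (S : R) : (u < v)%N -> (v < w)%N ->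
  S <= slope f u v -> S <= slope f v w -> S <= slope f u w.
Proof.
move=> H1 H2 A B.
have := slope_comb H1 H2. have := dpos H1. have := dpos H2.
have E : (w%:R - u%:R : R) = (v%:R - u%:R) + (w%:R - v%:R) by ring.
rewrite E. set a := (v%:R - u%:R). set b := (w%:R - v%:R). move=> Pb Pa Hc.
have : S * (a + b) <= slope f u w * (a + b).
  rewrite Hc (mulrDr S); apply: lerD; apply: ler_wpM2r => //; exact: ltW.
by rewrite ler_pM2r // addr_gt0.
Qed.

Lemma conv3 (a b c u v w : nat) : convex_on f [:: a; b; c] ->
  u \in [:: a; b; c] -> v \in [:: a; b; c] -> w \in [:: a; b; c] ->
  (u < v)%N -> (v < w)%N -> slope f u v <= slope f v w.
Proof. by move=> H; apply: H. Qed.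
End S.

Definition passes (R : realFieldType) (n : nat) (f : nat -> R) (B a : nat) : Prop :=
  forall k b c : nat, (2 ^ k <= B)%N -> triple_test n a b c k -> convex_on f [:: a; b; c].

Lemma pair_lem (R : realFieldType) (n : nat) (f : nat -> R) (K B u v : nat) :
  (u < v)%N -> (v < n)%N -> (v - u <= 2 ^ K)%N -> (2 ^ K <= B)%N ->
  passes n f B u -> passes n f B v ->
  slope f u u.+1 <= slope f u v /\ ((v.+1 < n)%N -> slope f u v <= slope f v v.+1).
Proof.
move=> Huv Hvn Hd HK Tu Tv.
have B1 : (1 <= B)%N by apply: leq_trans HK; rewrite expn_gt0.
have mem1 : forall a b c : nat, a \in [:: a; b; c] by move=> *; rewrite !inE eqxx.
have mem2 : forall a b c : nat, b \in [:: a; b; c] by move=> *; rewrite !inE eqxx ?orbT.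
have mem3 : forall a b c : nat, c \in [:: a; b; c] by move=> *; rewrite !inE eqxx ?orbT.
case: (ltnP u.+1 v) => Huv2; last first.
  have Ev : v = u.+1 by lia.
  subst v; split => // Hn.
  have Ht : triple_test n u.+1 u u.+2 0.
    split; [by rewrite expn0; lia | | by left | split; lia].
    by apply: (low_hub (q := u)); rewrite ?expn0 ?mul1n; lia.
  have := Tu; move/(_ 0%N) => _.
  have Hc := Tv 0%N u u.+2 ltac:(by rewrite expn0) Ht.
  exact: (conv3 Hc (mem2 _ _ _) (mem1 _ _ _) (mem3 _ _ _)).
have [i [q [Hi /andP [H1 H2] H3 H4]]] := exist_mid Huv2 Hd.
set m := (2 ^ i * q)%N in H1 H2 H3 H4.
have Pi : (2 ^ i <= B)%N by apply: leq_trans HK; rewrite leq_pexp2l.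
have q1 : (0 < q)%N by case: q @m H1 H2 H3 H4 => [|q'] //=; rewrite muln0.
have Pm : (2 ^ i <= m)%N by rewrite /m leq_pmulr.
have Hup : is_hub i u m by apply: (up_hub (q := q)).
have Hlo : is_hub i v m by apply: (low_hub (q := q)).
have Pn : (1 <= 2 ^ i < n)%N by rewrite expn_gt0 /=; lia.
have ha : slope f u u.+1 <= slope f u m.
  case: (ltnP u.+1 m) => Hum; last by have -> : m = u.+1 by lia.
  have Ht : triple_test n u m u.+1 i by split => //; [left | split]; lia.
  have Hc := Tu i m u.+1 Pi Ht.
  have := conv3 Hc (mem1 _ _ _) (mem3 _ _ _) (mem2 _ _ _) (ltnSn u) Hum.
  by apply: comb_ge => //.
have hb : slope f u m <= slope f m m.+1.
  have Ht : triple_test n u m m.+1 i by split => //; [right | split]; lia.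
  have Hc := Tu i m m.+1 Pi Ht.
  exact: (conv3 Hc (mem1 _ _ _) (mem2 _ _ _) (mem3 _ _ _)).
have hc : slope f m m.+1 <= slope f m v.
  case: (ltnP m.+1 v) => Hmv; last by have -> : v = m.+1 by lia.
  have Ht : triple_test n v m m.+1 i by split => //; [right | split]; lia.
  have Hc := Tv i m m.+1 Pi Ht.
  have := conv3 Hc (mem2 _ _ _) (mem3 _ _ _) (mem1 _ _ _) (ltnSn m) Hmv.
  by apply: comb_ge => //.
split.
  apply: (comb_ge (v := m)) => //; apply: (le_trans ha); exact: (le_trans hb hc).
move=> Hn.
have hd : slope f m v <= slope f v v.+1.
  have Ht : triple_test n v m v.+1 i by split => //; [left | split]; lia.
  have Hc := Tv i m v.+1 Pi Ht.
  exact: (conv3 Hc (mem2 _ _ _) (mem1 _ _ _) (mem3 _ _ _)).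
apply: (comb_le (v := m)) => //; apply: (le_trans hb); exact: (le_trans hc hd).
Qed.

Unset Implicit Arguments.
Theorem lemma3p3 (R : realFieldType) (n : nat) (f : nat -> R) (x y z : nat) :
  (x < y)%N -> (y < z)%N -> (z < n)%N ->
  slope f x y > slope f y z ->
  exists a k : nat,
    a \in [:: x; y; z] /\ (2 ^ k <= 2 * maxn (y - x) (z - y))%N /\ fails_test n f a k.
Proof.
move=> Hxy Hyz Hzn Hs.
apply: NNPP => Hno.
set d := maxn (y - x) (z - y) in Hno.
have d1 : (0 < d)%N by rewrite /d; lia.
have := trunc_log_bounds (isT : (1 < 2)%N) d1.
set t := trunc_log 2 d => /andP [Ht1 Ht2].
have HK1 : (d <= 2 ^ t.+1)%N by lia.
have HK2 : (2 ^ t.+1 <= 2 * d)%N by rewrite expnS; lia.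
have T : forall a, a \in [:: x; y; z] -> passes n f (2 * d) a.
  move=> a Ha k b c Hk Htt; apply: NNPP => Hc; apply: Hno.
  by exists a, k; split => //; split => //; exists b, c.
have mx : x \in [:: x; y; z] by rewrite !inE eqxx.
have my : y \in [:: x; y; z] by rewrite !inE eqxx ?orbT.
have mz : z \in [:: x; y; z] by rewrite !inE eqxx ?orbT.
have [_ P1] := pair_lem Hxy (ltn_trans Hyz Hzn) (leq_trans (leq_maxl _ _) HK1) HK2 (T x mx) (T y my).
have [P2 _] := pair_lem Hyz Hzn (leq_trans (leq_maxr _ _) HK1) HK2 (T y my) (T z mz).
have := le_trans (P1 ltac:(lia)) P2.
by rewrite leNgt Hs.
Qed.
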